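(* No vector $(x_\alpha,\dots,x_1)$ with $\alpha\ge3$ and $x_{\alpha-2}=1$ is realizable.
   Context: All graphs are finite, nonempty, and reflexive (every vertex has a loop). $N[v]$ is the closed neighborhood of $v$ (including $v$). For distinct $v,w$, $w$ strictly corners $v$ if $N[v]\subsetneq N[w]$; $v$ is then a strict corner. Corner ranking: set $G^{(1)}=G$, $k=1$. If $G^{(k)}$ is a clique, give all its vertices rank $k$ and stop. Else if $G^{(k)}$ has no strict corners, give all its vertices rank $\infty$ and stop. Else give every strict corner of $G^{(k)}$ rank $k$, delete them to get $G^{(k+1)}$ (induced subgraph), increase $k$ and repeat. The corner rank is the largest rank of a vertex; $X_k$ is the set of rank-$k$ vertices; cop-win graphs are exactly those of finite corner rank. A vector is a finite list of positive integers; the rank cardinality vector of a graph of corner rank $\alpha$ is $(x_\alpha,\dots,x_1)$ with $x_k=|X_k|$; a vector is realizable if it is the rank cardinality vector of some cop-win graph. *)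

(* Defs.v *)
From mathcomp Require Import all_boot.
Set Implicit Arguments. Unset Strict Implicit. Unset Printing Implicit Defensive.

(* A graph is a finite type T with an adjacency relation [adj]; the theorem
   assumes [adj] symmetric and reflexive (every vertex has a loop), and T
   nonempty.  Induced subgraphs are represented by vertex sets S : {set T}. *)
Section CornerRank.
Variables (T : finType) (adj : rel T).

(* closed neighbourhood of v in the induced subgraph on S
   (contains v when adj is reflexive and v \in S) *)
Definition nbhd (S : {set T}) (v : T) : {set T} := [set w in S | adj v w].

Definition strictly_corners (S : {set T}) (w v : T) : bool :=
  [&& w \in S, v \in S, w != v & nbhd S v \proper nbhd S w].

Definition strict_corner (S : {set T}) (v : T) : bool :=
  [exists w, strictly_corners S w v].

Definition corners (S : {set T}) : {set T} := [set v | strict_corner S v].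

Definition is_clique (S : {set T}) : bool :=
  [forall u in S, forall v in S, adj u v].

(* stage k of the corner ranking: G^(k) for k >= 1 (G^(0) = G^(1) = G is a
   harmless convention).  Once a clique is reached, the next stage is empty;
   if a non-clique stage has no strict corners, the stages stay constant. *)
Fixpoint stage (k : nat) : {set T} :=
  match k with
  | 0 => setT
  | 1 => setT
  | k'.+1 => let S := stage k' in
             if is_clique S then set0 else S :\: corners S
  end.

(* X_k : the set of vertices of rank k (k >= 1, finite ranks only) *)
Definition rank_set (k : nat) : {set T} :=
  let S := stage k in if is_clique S then S else corners S.

Definition corner_rank_is (alpha : nat) : Prop :=
  0 < alpha /\ stage alpha != set0 /\ is_clique (stage alpha).

End CornerRank.

Definition is_vector (xs : seq nat) : bool := all (fun x => 0 < x) xs.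

(* xs = (x_alpha, ..., x_1) is the rank cardinality vector of some cop-win
   (finite corner rank) finite nonempty reflexive graph *)
Definition realizable (xs : seq nat) : Prop :=
  exists (T : finType) (adj : rel T),
    [/\ symmetric adj, reflexive adj, 0 < #|T| &
      exists alpha, corner_rank_is adj alpha /\ size xs = alpha /\
        forall i, i < alpha -> nth 0 xs i = #|rank_set adj (alpha - i)| ].

(* Main.v *)
Require Import Defs.
From mathcomp Require Import all_boot.

Section Key.
Variables (T : finType) (adj : rel T).
Hypotheses (sym : symmetric adj) (refl : reflexive adj).

Lemma nbhdE (A : {set T}) x t : (t \in nbhd adj A x) = (t \in A) && adj x t.
Proof. by rewrite inE. Qed.

Lemma key (S : {set T}) (v : T) :
  corners adj S = [set v] -> ~~ is_clique adj (S :\ v) ->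
  is_clique adj ((S :\ v) :\: corners adj (S :\ v)) -> False.
Proof.
move=> hc nc cl.
set H := S :\ v.
have uniq : forall t y, t \in S -> y \in S -> t != y ->
    nbhd adj S t \proper nbhd adj S y -> t = v.
  move=> t y tS yS ty pr; apply/set1P; rewrite -hc inE; apply/existsP; exists y.
  by rewrite /strictly_corners yS tS eq_sym ty pr.
have : v \in corners adj S by rewrite hc set11.
rewrite inE => /existsP [w /and4P [wS vS wv vw]].
have wH : w \in H by rewrite /H in_setD1 wv wS.
have vwsub : forall t, adj v t -> t \in S -> adj w t.
  move=> t vt tS; have /subsetP := proper_sub vw.
  move=> /(_ t); rewrite !inE tS vt /= => /(_ isT).
  by [].
have HS : forall t, t \in H -> t \in S by move=> t; rewrite in_setD1 => /andP [].
have Hv : forall t, t \in H -> t != v by move=> t; rewrite in_setD1 => /andP [].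
have inH : forall t, t \in S -> t != v -> t \in H by move=> t tS tv; rewrite in_setD1 tv tS.
have lemA : forall u, u \in H -> strict_corner adj H u -> adj u v.
  move=> u uH /existsP [z /and4P [zH _ zu uz]].
  apply/negPn/negP => nuv.
  have e : nbhd adj S u = nbhd adj H u.
    apply/setP => t; rewrite !inE; case: (eqVneq t v) => [->|tv].
      by rewrite (negbTE nuv) !andbF.
    by [].
  have sub : nbhd adj H z \subset nbhd adj S z.
    by apply/subsetP => t; rewrite !inE => /andP [/andP [_ ->] ->].
  have pr : nbhd adj S u \proper nbhd adj S z.
    by rewrite e; apply: proper_sub_trans uz sub.
  have uz' : u != z by rewrite eq_sym.
  have := uniq u z (HS u uH) (HS z zH) uz' pr.
  by move=> uv; move: (Hv u uH); rewrite uv eqxx.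
have [y [yH yuniv]] : exists y, y \in H /\ forall t, t \in H -> adj y t.
  have P0 : (w \in H) && (nbhd adj H w \subset nbhd adj H w) by rewrite wH subxx.
  case: (@arg_maxnP T w (fun y => (y \in H) && (nbhd adj H w \subset nbhd adj H y)) (fun y => #|nbhd adj H y|) P0) => y /andP [yH wy] ymax.
  exists y; split => // t tH.
  have ync : ~~ strict_corner adj H y.
    apply/negP => /existsP [z /and4P [zH _ _ yz]].
    have := ymax z; rewrite zH (subset_trans wy (proper_sub yz)) => /(_ isT).
    by rewrite /geq /= leqNgt (proper_card yz).
  case: (boolP (strict_corner adj H t)) => tc.
    have tv := lemA t tH tc.
    have wt : adj w t by apply: vwsub; [rewrite sym | exact: HS].
    have /subsetP := wy; move=> /(_ t); rewrite !nbhdE tH wt /= => /(_ isT).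
    by [].
  have ck : forall s, s \in H -> ~~ strict_corner adj H s -> s \in H :\: corners adj H.
    by move=> s sH sc; rewrite in_setD sH andbT inE.
  move/forall_inP: cl => /(_ y (ck y yH ync)).
  by move/forall_inP => /(_ t (ck t tH tc)).
have [a [b [aH bH nab]]] : exists a b, [/\ a \in H, b \in H & ~~ adj a b].
  case: (boolP [exists a, exists b, [&& a \in H, b \in H & ~~ adj a b]]).
    by case/existsP => a /existsP [b /and3P [? ? ?]]; exists a, b.
  move=> hn; exfalso; move/negP: nc; apply.
  apply/forall_inP => a aH; apply/forall_inP => b bH.
  by move/existsPn: hn => /(_ a) /existsPn /(_ b); rewrite aH bH /= negbK.
case: (boolP (adj y v)) => yv.
  have ya : a != y by apply/eqP => ay; move: nab; rewrite ay (yuniv b bH).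
  have pr : nbhd adj S a \proper nbhd adj S y.
    apply/properP; split.
      apply/subsetP => t; rewrite !nbhdE => /andP [tS _]; rewrite tS /=.
      by case: (eqVneq t v) => [->|tv] //; exact: yuniv (inH t tS tv).
    exists b; first by rewrite nbhdE (HS b bH) (yuniv b bH).
    by rewrite nbhdE negb_and nab orbT.
  have av := uniq a y (HS a aH) (HS y yH) ya pr.
  by move: (Hv a aH); rewrite av eqxx.
case: (boolP [exists x, (x \in H) && ~~ adj w x]).
  case/existsP => x /andP [xH nwx].
  have nvx : ~~ adj v x by apply: contra nwx => vx; apply: vwsub vx (HS x xH).
  have xy : x != y by apply/eqP => exy; move: nwx; rewrite exy sym (yuniv w wH).
  have pr : nbhd adj S x \proper nbhd adj S y.
    apply/properP; split.
      apply/subsetP => t; rewrite !nbhdE => /andP [tS xt]; rewrite tS /=.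
      case: (eqVneq t v) => [tv|tv]; first by move: xt; rewrite tv sym (negbTE nvx).
      exact: yuniv (inH t tS tv).
    exists w; first by rewrite nbhdE wS (yuniv w wH).
    by rewrite nbhdE negb_and sym nwx orbT.
  have xv := uniq x y (HS x xH) (HS y yH) xy pr.
  by move: (Hv x xH); rewrite xv eqxx.
move=> hn.
have wall : forall x, x \in H -> adj w x.
  by move=> x xH; move/existsPn: hn => /(_ x); rewrite xH /= negbK.
have wv' : adj w v by apply: vwsub (refl v) vS.
have yw : y != w by apply/eqP => eyw; move: yv; rewrite eyw wv'.
have pr : nbhd adj S y \proper nbhd adj S w.
  apply/properP; split.
    apply/subsetP => t; rewrite !nbhdE => /andP [tS yt]; rewrite tS /=.
    case: (eqVneq t v) => [tv|tv]; first by move: yt; rewrite tv (negbTE yv).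
    exact: wall (inH t tS tv).
  exists v; first by rewrite nbhdE vS wv'.
  by rewrite nbhdE (negbTE yv) andbF.
have yv' := uniq y w (HS y yH) wS yw pr.
by move: (Hv y yH); rewrite yv' eqxx.
Qed.
End Key.

Theorem lemma3p20 (xs : seq nat) :
  is_vector xs -> 3 <= size xs -> nth 0 xs 2 = 1 -> ~ realizable xs.
Proof.
move=> _ hs hx [T [adj [sym refl _ [alpha [[a0 [ne cl]] [hsz hnth]]]]]].
have h2 : 2 < alpha by rewrite -hsz.
have := hnth 2 h2; rewrite hx.
have [k ek] : exists k, alpha = k.+3 by exists (alpha - 3); rewrite -addn3 subnK // -hsz.
rewrite ek in ne cl *.
have -> : k.+3 - 2 = k.+1 by [].
set S := stage adj k.+1.
have e2 : stage adj k.+2 = if is_clique adj S then set0 else S :\: corners adj S by [].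
have e3 : stage adj k.+3 = if is_clique adj (stage adj k.+2) then set0
                           else stage adj k.+2 :\: corners adj (stage adj k.+2) by [].
have c0 : is_clique adj set0 by apply/forall_inP => u; rewrite inE.
have nc2 : ~~ is_clique adj (stage adj k.+2).
  by apply/negP => c; move: ne; rewrite e3 c eqxx.
have nc1 : ~~ is_clique adj S by apply/negP => c; move: nc2; rewrite e2 c c0.
rewrite /rank_set -/S (negbTE nc1) => /esym/eqP/cards1P [v hv].
rewrite e2 (negbTE nc1) hv in nc2.
rewrite e3 e2 (negbTE nc1) hv (negbTE nc2) in cl.
exact: (@key T adj sym refl _ _ hv nc2 cl).
Qed.
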